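(* For any positive numbers $c_1,c_2$, any $t\ge0$, and any nonnegative numbers $B_0,B_1,\dots,B_t$, \[ c_1\sqrt{\sum_{k=0}^tB_k^2}-\sum_{k=0}^t\frac{B_k^2}{c_2}\sqrt{\sum_{j=0}^kB_j^2}\le 2c_1^{3/2}c_2^{1/2}. \] *)

(* Defs.v *)
From mathcomp Require Import all_boot all_order all_algebra.

(* Main.v *)
Require Import Defs.
From mathcomp Require Import all_boot all_order all_algebra.
From mathcomp Require Import ring lra.
Import Order.TTheory GRing.Theory Num.Theory.
Local Open Scope ring_scope.

Lemma key_ind (R : rcfType) (t : nat) (B : nat -> R) :
  (forall k, (k <= t)%N -> 0 <= B k) -> forall n, (n <= t)%N ->
  Num.sqrt (\sum_(0 <= j < n.+1) B j ^+ 2) ^+ 3 / 2 <=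
  \sum_(0 <= k < n.+1) B k ^+ 2 * Num.sqrt (\sum_(0 <= j < k.+1) B j ^+ 2).
Proof.
move=> HB; elim=> [|n IH] Hn.
  rewrite !big_nat1.
  set a := Num.sqrt _.
  have ha : 0 <= a by apply: sqrtr_ge0.
  have ha2 : a ^+ 2 = B 0%N ^+ 2 by rewrite sqr_sqrtr // sqr_ge0.
  rewrite -ha2; nra.
rewrite [X in _ <= X]big_nat_recr //=.
set b := Num.sqrt (\sum_(0 <= j < n.+1) B j ^+ 2).
have := IH (ltnW Hn); rewrite -/b => IH'.
have hS : \sum_(0 <= j < n.+2) B j ^+ 2 = \sum_(0 <= j < n.+1) B j ^+ 2 + B n.+1 ^+ 2.
  by rewrite big_nat_recr.
have hs0 : 0 <= \sum_(0 <= j < n.+1) B j ^+ 2.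
  by rewrite big_nat_cond; apply: sumr_ge0 => i _; apply: sqr_ge0.
set a := Num.sqrt (\sum_(0 <= j < n.+2) B j ^+ 2).
have ha : 0 <= a by apply: sqrtr_ge0.
have hb : 0 <= b by apply: sqrtr_ge0.
have hb2 : b ^+ 2 = \sum_(0 <= j < n.+1) B j ^+ 2 by rewrite sqr_sqrtr.
have ha2 : a ^+ 2 = b ^+ 2 + B n.+1 ^+ 2.
  rewrite sqr_sqrtr; first by rewrite hS hb2.
  by rewrite hS addr_ge0 // sqr_ge0.
have hab : b <= a.
  rewrite -(ler_pXn2r (n:=2)) ?nnegrE //; rewrite ha2; have := sqr_ge0 (B n.+1); lra.
have hp : 0 <= (a - b) * (a ^+ 2 + a * b - b ^+ 2).
  apply: mulr_ge0; first lra.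
  nra.
have e : B n.+1 ^+ 2 = a ^+ 2 - b ^+ 2 by rewrite ha2; ring.
have ee : a ^+ 3 / 2 - b ^+ 3 / 2 - (a ^+ 2 - b ^+ 2) * a
  = - ((a - b) * (a ^+ 2 + a * b - b ^+ 2)) / 2 by field.
rewrite e. lra.
Qed.

Theorem lemma27 (R : rcfType) (c1 c2 : R) (t : nat) (B : nat -> R) :
  0 < c1 -> 0 < c2 -> (forall k, (k <= t)%N -> 0 <= B k) ->
  c1 * Num.sqrt (\sum_(0 <= k < t.+1) B k ^+ 2)
  - \sum_(0 <= k < t.+1) (B k ^+ 2 / c2) * Num.sqrt (\sum_(0 <= j < k.+1) B j ^+ 2)
  <= 2 * (Num.sqrt c1) ^+ 3 * Num.sqrt c2.
Proof.
move=> h1 h2 HB.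
have K := @key_ind R t B HB t (leqnn t).
have -> : \sum_(0 <= k < t.+1) (B k ^+ 2 / c2) * Num.sqrt (\sum_(0 <= j < k.+1) B j ^+ 2)
  = (\sum_(0 <= k < t.+1) B k ^+ 2 * Num.sqrt (\sum_(0 <= j < k.+1) B j ^+ 2)) / c2.
  rewrite mulr_suml; apply: eq_bigr => i _; rewrite mulrAC.
  done.
move: K.
set s := Num.sqrt (\sum_(0 <= k < t.+1) B k ^+ 2).
set G := \sum_(0 <= k < t.+1) (B k ^+ 2 * _) => K.
have hs : 0 <= s by apply: sqrtr_ge0.
set u := Num.sqrt c1. set v := Num.sqrt c2.
have hu : 0 < u by rewrite sqrtr_gt0.
have hv : 0 < v by rewrite sqrtr_gt0.
have eu : c1 = u ^+ 2 by rewrite sqr_sqrtr // ltW.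
have ev : c2 = v ^+ 2 by rewrite sqr_sqrtr // ltW.
have hG : s ^+ 3 / 2 / c2 <= G / c2 by rewrite ler_pM2r ?invr_gt0.
suff : c1 * s - s ^+ 3 / 2 / c2 <= 2 * u ^+ 3 * v by lra.
rewrite ev eu.
set w := u * v.
have hw : 0 < w by apply: mulr_gt0.
have main : 2 * w ^+ 2 * s - s ^+ 3 <= 4 * w ^+ 3.
  case: (lerP s (2 * w)) => hsw.
    have : 0 <= s ^+ 3 by apply: exprn_ge0.
    nra.
  have h3 : 0 <= (s - 2 * w) * (s + 2 * w) by apply: mulr_ge0; lra.
  have e3 : (s - 2 * w) * (s + 2 * w) = s ^+ 2 - 4 * w ^+ 2 by ring.
  have h4 : 4 * w ^+ 2 <= s ^+ 2 by lra.
  have h5 : 0 <= s * (s ^+ 2 - 4 * w ^+ 2) by apply: mulr_ge0 => //; lra.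
  have h6 : 0 <= w ^+ 3 by apply: exprn_ge0; lra.
  have h7 : 0 <= w ^+ 2 * s by apply: mulr_ge0 => //; apply: sqr_ge0.
  have e7 : s * (s ^+ 2 - 4 * w ^+ 2) = s ^+ 3 - 4 * (w ^+ 2 * s) by ring.
  lra.
have hv2 : 0 < v ^+ 2 by apply: exprn_gt0.
rewrite -(ler_pM2r (x:= 2 * v ^+ 2)); last by nra.
have -> : (u ^+ 2 * s - s ^+ 3 / 2 / v ^+ 2) * (2 * v ^+ 2)
  = 2 * w ^+ 2 * s - s ^+ 3 by rewrite /w; field; rewrite gt_eqF.
have -> : 2 * u ^+ 3 * v * (2 * v ^+ 2) = 4 * w ^+ 3 by rewrite /w; ring.
exact: main.
Qed.
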